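(* Let $\mathfrak g$ be an admissible non-reductive Lie algebra with $\mathfrak z(\mathfrak g)\subseteq[\mathfrak g,\mathfrak g]$, and let $\mathfrak r$ be the radical of $\mathfrak g$. If $h\in\mathfrak g$ is an Euler element of $\mathfrak g$, then $[h,\mathfrak r]=\{0\}$.
   Context: A finite-dimensional real Lie algebra $\mathfrak g$ is admissible if it contains a pointed (no affine lines), generating (spanning), closed convex subset invariant under $\operatorname{Inn}(\mathfrak g)=\langle e^{\operatorname{ad}\mathfrak g}\rangle$. An Euler element of $\mathfrak g$ is an element $h$ such that $\operatorname{ad}h$ is diagonalizable with spectrum contained in $\{-1,0,1\}$. *)

(* Defs.v *)
From HB Require Import structures.
From mathcomp Require Import all_boot all_order all_algebra.
From mathcomp Require Import all_classical all_reals all_analysis.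
Set Implicit Arguments. Unset Strict Implicit. Unset Printing Implicit Defensive.
Import Order.TTheory GRing.Theory Num.Theory.
Import numFieldNormedType.Exports.
Local Open Scope classical_set_scope.
Local Open Scope ring_scope.

(* A finite-dimensional real Lie algebra is modelled (up to isomorphism) as
   R^n = 'rV[R]_n equipped with a bracket [br]. *)
Section LieDefs.
Variables (R : realType) (n : nat).
Notation V := 'rV[R]_n.

Definition is_lie_bracket (br : V -> V -> V) : Prop :=
  [/\ (forall x, linear (br x)),
      (forall y, linear (br^~ y)),
      (forall x, br x x = 0) &
      (forall x y z, br x (br y z) + br y (br z x) + br z (br x y) = 0)].

Definition lspan (S : set V) : set V :=
  [set v | exists (s : seq (R * V)),
      (forall p, p \in s -> S p.2) /\ v = \sum_(p <- s) p.1 *: p.2].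

(* the matrix of ad x (acting on row vectors: v *m ad_mx x = br x v) *)
Definition ad_mx (br : V -> V -> V) (x : V) : 'M[R]_n := lin1_mx (br x).

Definition expmx (A : 'M[R]_n) : 'M[R]_n :=
  \matrix_(i, j) lim ((fun N : nat => \sum_(k < N) (A ^+ k) i j / (k`!)%:R) @ \oo).

Definition convex_set (C : set V) : Prop :=
  forall x y (t : R), C x -> C y -> 0 <= t -> t <= 1 -> C (t *: x + (1 - t) *: y).

Definition pointed_set (C : set V) : Prop :=
  ~ exists c v : V, v != 0 /\ forall t : R, C (c + t *: v).

Definition generating_set (C : set V) : Prop := lspan C = setT.

(* invariant under Inn(g) = <e^{ad g}>; invariance under the generators
   e^{ad x} (x in g) is equivalent, since (e^{ad x})^{-1} = e^{ad (-x)}. *)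
Definition Inn_invariant (br : V -> V -> V) (C : set V) : Prop :=
  forall x v, C v -> C (v *m expmx (ad_mx br x)).

Definition admissible (br : V -> V -> V) : Prop :=
  exists C : set V, [/\ closed C, convex_set C, pointed_set C,
                        generating_set C & Inn_invariant br C].

Definition euler_element (br : V -> V -> V) (h : V) : Prop :=
  diagonalizable (ad_mx br h) /\
  forall a : R, eigenvalue (ad_mx br h) a -> a \in [:: -1; 0; 1].

Definition is_subspace (S : set V) : Prop :=
  S 0 /\ forall (a : R) x y, S x -> S y -> S (a *: x + y).

Definition is_ideal (br : V -> V -> V) (I : set V) : Prop :=
  is_subspace I /\ forall x y, I y -> I (br x y).

Fixpoint derived (br : V -> V -> V) (I : set V) (k : nat) : set V :=
  if k is k'.+1 then
    lspan [set br x y | x in derived br I k' & y in derived br I k']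
  else I.

Definition solvable_set (br : V -> V -> V) (I : set V) : Prop :=
  exists k, derived br I k `<=` [set 0].

Definition is_radical (br : V -> V -> V) (r : set V) : Prop :=
  [/\ is_ideal br r, solvable_set br r &
      forall I, is_ideal br I -> solvable_set br I -> I `<=` r].

Definition lie_center (br : V -> V -> V) : set V :=
  [set z | forall y, br z y = 0].

Definition derived_algebra (br : V -> V -> V) : set V :=
  lspan [set br x y | x in setT & y in setT].

Definition reductive (br : V -> V -> V) : Prop :=
  forall r, is_radical br r -> r = lie_center br.

End LieDefs.

(* Main.v *)
Require Import Defs.
From HB Require Import structures.
From mathcomp Require Import all_boot all_order all_algebra.
From mathcomp Require Import all_classical all_reals all_analysis.
From mathcomp Require Import ring lra.
Import Order.TTheory GRing.Theory Num.Theory.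
Import numFieldNormedType.Exports.
Local Open Scope classical_set_scope.
Local Open Scope ring_scope.
Set Implicit Arguments. Unset Strict Implicit.

Lemma expmx_sq0 (R : realType) (n : nat) (A : 'M[R]_n) :
  A *m A = 0 -> expmx A = 1%:M + A.
Proof.
move=> AA; apply/matrixP => i j; rewrite /expmx mxE.
apply: cvg_lim; first exact: Rhausdorff. apply: cvg_near_cst; near=> N.
have HN : (2 <= N)%N by near: N; exists 2%N.
have Hk : forall k, (2 <= k)%N -> forall i j, (A ^+ k) i j = 0.
  move=> k Hk2 i0 j0; suff -> : A ^+ k = 0 by rewrite mxE.
  elim: k Hk2 => // k IH; rewrite leq_eqVlt => /orP[/eqP <-|Hk].
    by rewrite expr2 -mulmxE AA.
  by rewrite exprS IH ?mulr0.
rewrite -(subnKC HN) big_split_ord /= [X in _ + X]big1 ?addr0; last first.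
  by move=> k _; rewrite Hk ?leq_addr // mul0r.
rewrite !big_ord_recr big_ord0 /= expr0 expr1.
by rewrite add0r !divr1 !mxE.
Unshelve. all: by end_near.
Qed.

Section Lie.
Variables (R : realType) (n : nat) (br : 'rV[R]_n -> 'rV[R]_n -> 'rV[R]_n).
Hypothesis Hbr : is_lie_bracket br.
Local Notation V := 'rV[R]_n.

Lemma brlinr x : linear (br x). Proof. by case: Hbr. Qed.
Lemma brlinl y : linear (br^~ y). Proof. by case: Hbr. Qed.

Definition brR x : {linear V -> V} :=
  HB.pack (br x) (GRing.isLinear.Build R V V *:%R (br x) (brlinr x)).
Definition brLf y : {linear V -> V} :=
  HB.pack (br^~ y) (GRing.isLinear.Build R V V *:%R (br^~ y) (brlinl y)).

Lemma brDr x u v : br x (u + v) = br x u + br x v.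
Proof. exact: (linearD (brR x)). Qed.
Lemma brZr x a u : br x (a *: u) = a *: br x u.
Proof. exact: (linearZ_LR (brR x)). Qed.
Lemma br0r x : br x 0 = 0.
Proof. exact: (linear0 (brR x)). Qed.
Lemma brNr x u : br x (- u) = - br x u.
Proof. exact: (linearN (brR x)). Qed.
Lemma brBr x u v : br x (u - v) = br x u - br x v.
Proof. exact: (linearB (brR x)). Qed.
Lemma brDl y u v : br (u + v) y = br u y + br v y.
Proof. exact: (linearD (brLf y)). Qed.
Lemma brZl y a u : br (a *: u) y = a *: br u y.
Proof. exact: (linearZ_LR (brLf y)). Qed.
Lemma br_sumr x (I : Type) (s : seq I) (F : I -> V) :
  br x (\sum_(i <- s) F i) = \sum_(i <- s) br x (F i).
Proof. exact: (linear_sum (brR x)). Qed.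

Lemma br_anti x y : br x y = - br y x.
Proof.
case: Hbr => _ _ Hxx _.
have := Hxx (x + y); rewrite brDl !brDr (Hxx x) (Hxx y).
by rewrite add0r addr0 => /eqP; rewrite addr_eq0 => /eqP.
Qed.

Lemma br_deriv x a b : br x (br a b) = br (br x a) b + br a (br x b).
Proof.
case: Hbr => _ _ _ Hj; have := Hj x a b.
rewrite (br_anti b x) brNr (br_anti (br x a) b) => /eqP.
rewrite -addrA addr_eq0 => /eqP ->.
by rewrite opprD !opprK addrC.
Qed.

Lemma adE x v : v *m ad_mx br x = br x v.
Proof. exact: (mul_rV_lin1 (brR x)). Qed.


Section Sub.
Variable S : set V.
Hypothesis HS : is_subspace S.
Lemma sub0 : S 0. Proof. by case: HS. Qed.
Lemma subD x y : S x -> S y -> S (x + y).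
Proof. by move=> Hx Hy; have := HS.2 1 x y Hx Hy; rewrite scale1r. Qed.
Lemma subZ a x : S x -> S (a *: x).
Proof. by move=> Hx; have := HS.2 a x 0 Hx sub0; rewrite addr0. Qed.
Lemma subN x : S x -> S (- x).
Proof. by move=> Hx; rewrite -scaleN1r; apply: subZ. Qed.
Lemma subB x y : S x -> S y -> S (x - y).
Proof. by move=> Hx Hy; apply: subD => //; apply: subN. Qed.
Lemma sub_sum (I : eqType) (s : seq I) (F : I -> V) :
  (forall i, i \in s -> S (F i)) -> S (\sum_(i <- s) F i).
Proof.
elim: s => [|a s IH] H; first by rewrite big_nil; apply: sub0.
rewrite big_cons; apply: subD; first by apply: H; rewrite inE eqxx.
by apply: IH => i Hi; apply: H; rewrite inE Hi orbT.
Qed.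
End Sub.

Lemma lspan_sub (S : set V) v : S v -> lspan S v.
Proof. by move=> Sv; exists [:: (1, v)]; split; [move=> p; rewrite inE => /eqP ->|rewrite big_seq1 scale1r]. Qed.

Lemma lspan_subspace (S : set V) : is_subspace (lspan S).
Proof.
split; first by exists [::]; rewrite big_nil.
move=> a x y [sx [Hsx ->]] [sy [Hsy ->]].
exists ([seq (a * p.1, p.2) | p <- sx] ++ sy); split.
  move=> p; rewrite mem_cat => /orP[/mapP[q Hq ->]|Hp]. exact: (Hsx q Hq). exact: Hsy.
by rewrite big_cat big_map scaler_sumr; congr (_ + _); apply: eq_bigr => p _; rewrite scalerA.
Qed.

Lemma lspan_ind (S T : set V) : is_subspace T -> S `<=` T -> lspan S `<=` T.
Proof.
move=> HT HST v [s [Hs ->]]; apply: (@sub_sum _ HT _ s (fun p => p.1 *: p.2)) => p Hp.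
by apply: (subZ HT); apply: HST; apply: Hs.
Qed.

Lemma derived_subspace r : is_subspace r -> forall k, is_subspace (derived br r k).
Proof. by move=> Hr [|k] //=; apply: lspan_subspace. Qed.

Lemma derived_br r k a b : derived br r k a -> derived br r k b ->
  derived br r k.+1 (br a b).
Proof. by move=> Ha Hb; apply: lspan_sub; exists a => //; exists b. Qed.

Lemma derived_ideal r : is_ideal br r -> forall k, is_ideal br (derived br r k).
Proof.
move=> [HrS HrI]; elim=> [|k [IHs IHi]] //=; split; first exact: lspan_subspace.
move=> x y Hy.
have : lspan [set br x z | z in lspan [set br a b | a in derived br r k & b in derived br r k]] (br x y).
  by apply: lspan_sub; exists y.
apply: lspan_ind; first exact: lspan_subspace.
move=> _ [z Hz <-]; case: Hz => s [Hs ->]; rewrite br_sumr.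
apply: (sub_sum (lspan_subspace _)) => p Hp; rewrite brZr.
apply: (subZ (lspan_subspace _)).
have [a Ha [b Hb <-]] := Hs p Hp.
rewrite br_deriv; apply: (subD (lspan_subspace _)); apply: lspan_sub.
  by exists (br x a); [exact: IHi|exists b].
by exists a => //; exists (br x b) => //; exact: IHi.
Qed.


Lemma euler_cube h : euler_element br h ->
  forall v, br h (br h (br h v)) = br h v.
Proof.
move=> [Hd Hev] v; set A := ad_mx br h.
rewrite -!adE.
have [rs urs rsP] := proj1 (@diagonalizablePeigen R n A) Hd.
have Hv : (v <= \sum_(r <- rs) eigenspace A r)%MS by rewrite (rsP.2 _ v).2 submx1.
rewrite (big_nth 0) big_mkord in Hv.
have [u_ ->] := sub_sumsmxP Hv.
rewrite !mulmx_suml; apply: eq_bigr => i _.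
set w := u_ i *m _.
have Ew : w *m A = rs`_i *: w by apply/eigenspaceP; rewrite submxMl.
have [->|wn0] := eqVneq w 0; first by rewrite !mul0mx.
have : eigenvalue A rs`_i by apply/eigenvalueP; exists w.
move/Hev; set a := rs`_i.
have E3 : w *m A *m A *m A = (a * (a * a)) *: w.
  by rewrite Ew -!scalemxAl Ew -!scalemxAl Ew !scalerA /a mulrA.
rewrite E3 Ew -/a !inE => /or3P[] /eqP ->; congr (_ *: _); lra.
Qed.


Lemma sq0_central y : admissible br -> (forall v, br y (br y v) = 0) ->
  forall u, br y u = 0.
Proof.
move=> [C [_ _ Hpt Hgen Hinv]] Hyy.
have HC : forall v, C v -> br y v = 0.
  move=> v Cv; have [//|Hne] := eqVneq (br y v) 0; exfalso; apply: Hpt.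
  exists v, (br y v); split => // t.
  have M0 : ad_mx br (t *: y) *m ad_mx br (t *: y) = 0.
    apply/row_matrixP => i; rewrite row0 rowE mulmxA !adE !brZl brZr Hyy.
    by rewrite !scaler0.
  by have := Hinv (t *: y) v Cv; rewrite expmx_sq0 // mulmxDr mulmx1 adE brZl.
move=> u; have : lspan C u by rewrite Hgen.
case=> s [Hs ->]; rewrite br_sumr big1_seq // => p /andP[_ Hp].
by rewrite brZr HC ?scaler0 //; apply: Hs.
Qed.

Lemma two_zero (p q : V) : p + q = 0 -> p - q = 0 -> p = 0.
Proof.
move=> H1 /subr0_eq Hpq; move: H1; rewrite Hpq -mulr2n -scaler_nat => /eqP.
by rewrite scaler_eq0 pnatr_eq0 /= => /eqP.
Qed.

Variable h : V.
Hypothesis He : euler_element br h.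

Lemma eigen_zero w m : br h w = m *: w -> m * m * m != m -> w = 0.
Proof.
move=> Hw Hm; have := euler_cube He w.
rewrite Hw !brZr Hw brZr Hw !scalerA => /eqP; rewrite -subr_eq0 -scalerBl scaler_eq0.
by rewrite subr_eq0 (negbTE Hm) /= => /eqP.
Qed.

Lemma eig_br y u e l : br h y = e *: y -> br h u = l *: u ->
  br h (br y u) = (e + l) *: br y u.
Proof. by move=> Hy Hu; rewrite br_deriv Hy Hu brZl brZr scalerDl. Qed.


Lemma main_ind r K : admissible br -> is_ideal br r ->
  derived br r K `<=` [set 0] ->
  forall j k, (j + k = K)%N -> forall y e, derived br r k y ->
  (e = 1 \/ e = -1) -> br h y = e *: y -> y = 0.
Proof.
move=> Ha Hid HK; elim=> [|j IH] k Hjk y e Hy He1 Hhy.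
  by rewrite add0n in Hjk; subst; apply: HK.
have IHk := IH k.+1 (etrans (addnS j k) Hjk).
have [HDs HDi] := derived_ideal Hid k.
have F_eig : forall u l, br h u = l *: u ->
    br h (br y (br y u)) = (e + (e + l)) *: br y (br y u).
  by move=> u l Hu; apply: eig_br => //; apply: eig_br.
have F_in : forall u, derived br r k.+1 (br y (br y u)).
  move=> u; have Hyu : derived br r k (br y u).
    by rewrite br_anti; apply: (subN HDs); apply: HDi.
  exact: derived_br.
have Hyy : forall v, br y (br y v) = 0.
  move=> v; set a := br h (br h v); set b := br h v.
  have Ta : br h a = b by rewrite /a /b euler_cube.
  have E0 : br h (v - a) = 0 *: (v - a) by rewrite brBr Ta scale0r subrr.
  have E1 : br h (a + b) = 1 *: (a + b) by rewrite brDr Ta scale1r addrC.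
  have Em : br h (a - b) = (-1) *: (a - b).
    by rewrite brBr Ta scaleN1r opprB.
  have Z : forall u l, br h u = l *: u ->
      (e + (e + l)) * (e + (e + l)) * (e + (e + l)) != e + (e + l) ->
      br y (br y u) = 0.
    by move=> u l Hu Hne; apply: (eigen_zero (F_eig u l Hu)).
  have Z' : forall u l, br h u = l *: u -> e + (e + l) = e -> br y (br y u) = 0.
    move=> u l Hu Hel; apply: (IHk _ e) => //.
    by rewrite -Hel; apply: F_eig.
  have H0 : br y (br y (v - a)) = 0.
    by apply: (Z _ _ E0); case: He1 => ->; apply/eqP; lra.
  have H1 : br y (br y (a + b)) = 0.
    case: He1 => He1.
      by apply: (Z _ _ E1); rewrite He1; apply/eqP; lra.
    by apply: (Z' _ _ E1); rewrite He1; lra.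
  have Hm : br y (br y (a - b)) = 0.
    case: He1 => He1.
      by apply: (Z' _ _ Em); rewrite He1; lra.
    by apply: (Z _ _ Em); rewrite He1; apply/eqP; lra.
  have Fa : br y (br y a) = 0.
    apply: (two_zero (q := br y (br y b))); first by rewrite -(brDr y (br y a)) -(brDr y a).
    by rewrite -(brBr y (br y a)) -(brBr y a).
  by move: H0; rewrite !brBr Fa subr0.
have Hyh := sq0_central Ha Hyy h.
move: Hhy; rewrite br_anti Hyh oppr0 => /esym/eqP; rewrite scaler_eq0.
case/orP => /eqP // He0; exfalso; case: He1 => He1; move: He0; rewrite He1; lra.
Qed.

End Lie.

Theorem proposition4p12 (R : realType) (n : nat) (br : 'rV[R]_n -> 'rV[R]_n -> 'rV[R]_n)
  (Hbr : is_lie_bracket br)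
  (Hadm : admissible br)
  (Hnred : ~ reductive br)
  (Hz : lie_center br `<=` derived_algebra br)
  (r : set 'rV[R]_n) (Hr : is_radical br r)
  (h : 'rV[R]_n) (Hh : euler_element br h) :
  forall x, r x -> br h x = 0.
Proof.
move=> x rx; case: Hr => Hid [K HK] _.
have [Hs Hi] := Hid.
have M := main_ind Hbr Hh Hadm Hid HK (addn0 K).
set a := br h (br h x); set b := br h x.
have Ta : br h a = b by rewrite /a /b (euler_cube Hbr Hh).
have ra : r a by apply: (Hi); apply: (Hi).
have rb : r b by apply: (Hi).
have E1 : a + b = 0.
  apply: (M _ 1) => /=; [exact: subD| by left|].
  by rewrite (brDr Hbr h a b) Ta scale1r addrC.
have Em : a - b = 0.
  apply: (M _ (-1)) => /=; [exact: subB| by right|].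
  by rewrite (brBr Hbr h a b) Ta scaleN1r opprB.
apply: (two_zero (q := a)); first by rewrite addrC.
by rewrite -opprB Em oppr0.
Qed.
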